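(* Let $d\ge2$ be an integer and $a\in\mathbb C$ such that $((d+1)a)^k=1$, where $k$ is the smallest such positive integer. Let $p(t)=a\Bigl((d-1)-\sum_{i=1}^d2t^i\Bigr)$ and put $N=\operatorname{lcm}(k,d+1)$ if $d$ is odd and $N=\operatorname{lcm}(k,2(d+1))$ if $d$ is even. Then the column partial sums of $p$ satisfy $S_{[m+N]}=S_{[m]}$ for all $m\ge1$; in particular $(S_{[m]})_{m\ge1}$ is periodic.
   Context: For a polynomial $p(t)$ of degree $d\ge1$ with $p(0)\neq0$, the column partial sums are $S_{[m]}:=[t^{(m-1)(d+1)}]\dfrac{(tp(t))^m}{(1-t)(1-t^{d+1})}$ for $m\ge1$ (equivalently, the sum of the coefficients of $t^0,\dots,t^{(m-1)(d+1)}$ in $(tp(t))^m/(1-t^{d+1})$). *)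

(* Defs.v *)
From HB Require Import structures.
From mathcomp Require Import all_boot all_order all_algebra.
Set Implicit Arguments. Unset Strict Implicit. Unset Printing Implicit Defensive.
Import Order.TTheory GRing.Theory Num.Theory.
Local Open Scope ring_scope.

(* Coefficient of t^n in the formal power series  q(t) / ((1-t)(1-t^D)),
   i.e. q(t) * (sum_i t^i) * (sum_j t^(j D)), written out:
   sum over i, j >= 0 with i + j*D <= n of q_(n - i - j*D). *)
Definition coef_div_1t_1tD (R : nzRingType) (D : nat) (q : {poly R}) (n : nat) : R :=
  \sum_(i < n.+1) \sum_(j < n.+1 | (i + j * D <= n)%N) q`_(n - (i + j * D)).

(* Column partial sum S_[m] of a polynomial p of degree d = (size p).-1:
   S_[m] = [t^((m-1)(d+1))] (t p(t))^m / ((1-t)(1-t^(d+1))). *)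
Definition colsum (R : nzRingType) (p : {poly R}) (m : nat) : R :=
  let d := (size p).-1 in
  coef_div_1t_1tD d.+1 (('X * p) ^+ m) ((m.-1) * d.+1).

Definition p18 (R : nzRingType) (d : nat) (a : R) : {poly R} :=
  a%:P * (((d - 1)%:R)%:P - \sum_(1 <= i < d.+1) 2%:P * 'X^i).

(* Main.v *)
From HB Require Import structures.
From mathcomp Require Import all_boot all_order all_algebra zify ring.
Require Import Defs.
Import Order.TTheory GRing.Theory Num.Theory.
Local Open Scope ring_scope.

Lemma sum_prefix (R : nzRingType) (G : nat -> R) (n x : nat) : (x <= n)%N ->
  \sum_(i < n.+1 | (i <= x)%N) G i = \sum_(i < x.+1) G i.
Proof.
move=> hx.
rewrite -(big_mkord (fun i => (i <= x)%N) G) -(big_mkord xpredT G).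
rewrite (@big_nat_widen _ _ _ 0 x.+1 n.+1) //.
Qed.

Lemma coef_div_W (R : nzRingType) (D n : nat) (F : {poly R}) : (0 < D)%N ->
  coef_div_1t_1tD D F n = \sum_(l < n.+1) F`_l *+ ((n - l) %/ D).+1.
Proof.
move=> D0; rewrite /coef_div_1t_1tD.
have cnt : forall l : 'I_n.+1, F`_l *+ ((n - l) %/ D).+1 =
   \sum_(j < n.+1) (if (j * D <= n - l)%N then F`_l else 0).
  move=> l; rewrite -big_mkcond /=.
  rewrite (eq_bigl (fun j : 'I_n.+1 => (j <= (n - l) %/ D)%N)); last first.
    by move=> j; rewrite leq_divRL.
  rewrite (@sum_prefix _ (fun _ => F`_l)); last by rewrite (leq_trans (leq_div _ _)) // leq_subr.
  by rewrite sumr_const card_ord.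
rewrite (eq_bigr _ (fun l _ => cnt l)) exchange_big /=.
under eq_bigr do rewrite big_mkcond /=.
rewrite exchange_big /=.
apply: eq_bigr => j _.
have [hj|hj] := leqP (j * D) n; last first.
  rewrite big1; last by move=> i _; case: ifP => //; lia.
  by rewrite big1 //; move=> i _; case: ifP => //; lia.
rewrite -big_mkcond -[RHS]big_mkcond /=.
move: hj; set y := (j * D)%N => hj.
rewrite (eq_bigl (fun i : 'I_n.+1 => (i <= n - y)%N)); last by move=> i; lia.
rewrite [RHS](eq_bigl (fun i : 'I_n.+1 => (i <= n - y)%N)); last by move=> i; have := ltn_ord i; lia.
rewrite (@sum_prefix _ (fun i => F`_(n - (i + y)))) ?leq_subr //.
rewrite (@sum_prefix _ (fun i => F`_i)) ?leq_subr //.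
rewrite -(big_mkord xpredT (fun i => F`_(n - (i + y)))) big_rev_mkord subn0.
apply: eq_bigr => i _.
have := ltn_ord i; move=> hi; f_equal; lia.
Qed.

Section W.
Variable (R : comNzRingType) (n D : nat).
Hypothesis D0 : (0 < D)%N.

Definition W (F : {poly R}) := \sum_(l < n.+1) F`_l *+ ((n - l) %/ D).+1.
Definition wf (x : nat) : nat := if (x <= n)%N then ((n - x) %/ D).+1 else 0%N.

Lemma WD F G : W (F + G) = W F + W G.
Proof. by rewrite /W -big_split; apply: eq_bigr => i _; rewrite coefD mulrnDl. Qed.
Lemma WN F : W (- F) = - W F.
Proof. by rewrite /W -sumrN; apply: eq_bigr => i _; rewrite coefN mulNrn. Qed.
Lemma WB F G : W (F - G) = W F - W G.
Proof. by rewrite WD WN. Qed.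
Lemma WZ c F : W (c *: F) = c * W F.
Proof. by rewrite /W mulr_sumr; apply: eq_bigr => i _; rewrite coefZ mulrnAr. Qed.
Lemma Wsum k (G : nat -> {poly R}) : W (\sum_(i < k) G i) = \sum_(i < k) W (G i).
Proof.
rewrite /W exchange_big /=; apply: eq_bigr => l _.
by rewrite coef_sum sumrMnl.
Qed.
Lemma WXn x : W 'X^x = (wf x)%:R.
Proof.
rewrite /W /wf.
rewrite (eq_bigr (fun l : 'I_n.+1 => if (l == x :> nat) then (((n - l) %/ D).+1)%:R else 0)); last first.
  by move=> l _; rewrite coefXn; case: (_ == _) => /=; rewrite ?mul0rn.
rewrite -big_mkcond (big_ord1_eq _ (fun l => (((n - l) %/ D).+1)%:R)) ltnS.
by case: ifP.
Qed.

Lemma wf_shift x : wf x = (wf (x + D) + (x <= n))%N.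
Proof.
rewrite /wf; case: (leqP x n) => hx; last by case: ifP => //; lia.
case: (leqP (x + D) n) => hxD /=; last first.
  by rewrite divn_small ?addn1 //; lia.
have -> : (n - x = (n - (x + D)) + 1 * D)%N by lia.
by rewrite divnDMl // addn1 addn1.
Qed.

Lemma WM l : (l < n)%N -> W (('X - 1) * ('X^D - 1) * 'X^l) = 0.
Proof.
move=> hl.
have -> : ('X - 1) * ('X^D - 1) * 'X^l = 'X^(l + D + 1) - 'X^(l + D) - 'X^(l + 1) + ('X^l : {poly R}).
  rewrite !exprD expr1.
  set b := (_ : {poly R})^+D. set c := (_ : {poly R})^+l. set x := ('X : {poly R}). ring.
rewrite WD !WB !WXn.
rewrite (wf_shift l) (wf_shift (l + 1)) (_ : (l + 1 + D = l + D + 1)%N); last lia.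
have h1 : (l <= n)%N by lia.
have h2 : (l + 1 <= n)%N by lia.
rewrite h1 h2 !natrD.
set u := (wf _)%:R; set v := (wf _)%:R.
set t := true%:R. ring.
Qed.

Lemma WMA (A : {poly R}) : (size A <= n)%N -> W (('X - 1) * ('X^D - 1) * A) = 0.
Proof.
move=> hA; rewrite -(coefK A) poly_def mulr_sumr.
rewrite (Wsum _ (fun i => ('X - 1) * ('X^D - 1) * (A`_i *: 'X^i))) big1 // => i _.
by rewrite -scalerAr WZ WM ?mulr0 // (leq_trans (ltn_ord i)).
Qed.

Lemma WR j (P : {poly R}) : (size P <= D.+1)%N -> n = (j * D)%N ->
  W P = j%:R * P.[1] + P`_0.
Proof.
move=> hP hn; rewrite /W.
case: j hn => [|j] hn.
  by rewrite hn /= big_ord_recl big_ord0 mul0r add0r addr0 subnn div0n.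
have hnD : (D <= n)%N by rewrite hn mulSn leq_addr.
rewrite (horner_coef_wide _ (_ : size P <= n.+1)%N); last by apply: leq_trans hP _.
rewrite (eq_bigr (fun l : 'I_n.+1 => P`_l *+ j.+1 + (if (l == 0 :> nat) then P`_l else 0))); last first.
  move=> l _.
  have [hl|hl] := leqP (l : nat) D; last first.
    by rewrite nth_default ?mul0rn ?add0r; [case: ifP | apply: leq_trans hP _].
  case: eqP => [->|hl0] /=.
    by rewrite subn0 hn mulnK // -mulrSr.
  rewrite addr0; congr (_ *+ _).
  have -> : (n - l = (D - l) + j * D)%N.
    by move: hn hl hl0; rewrite mulSn; move: (j * D)%N => y hy; lia.
  by rewrite divnDMl // divn_small //; lia.
rewrite big_split /= -big_mkcond /= big_ord1_eq /=.
congr (_ + _).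
rewrite mulr_sumr; apply: eq_bigr => i _.
by rewrite expr1n mulr1 mulr_natl.
Qed.
End W.

Arguments W {R} n D F.

Lemma sum_id2 (k : nat) : (2 * \sum_(i < k) i = k * k.-1)%N.
Proof.
elim: k => [|k IH]; first by rewrite big_ord0.
rewrite big_ord_recr /= mulnDr IH; case: k {IH} => //= k; lia.
Qed.

Section Main.
Variable C : numClosedFieldType.
Variable d : nat.
Variable a : C.
Hypothesis d2 : (2 <= d)%N.

Local Notation D := d.+1.
Definition q : {poly C} := \sum_(i < D) 'X^i.

Lemma Xsub1q : 'X^D - 1 = ('X - 1) * q.
Proof. by rewrite /q subrX1. Qed.

Lemma q_neq0 : q != 0.
Proof.
apply/eqP => q0; have := size_Xn_sub_1 C (ltn0Sn d).
by rewrite Xsub1q q0 mulr0 size_poly0.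
Qed.

Lemma size_q : size q = D.
Proof.
have := size_Xn_sub_1 C (ltn0Sn d).
rewrite Xsub1q size_mul ?q_neq0 //; last by rewrite -size_poly_eq0 -polyC1 size_XsubC.
by rewrite -polyC1 size_XsubC /=; case.
Qed.

Lemma q1 : q.[1] = D%:R.
Proof.
rewrite /q horner_sum (eq_bigr (fun _ => 1)); last by move=> i _; rewrite hornerXn expr1n.
by rewrite sumr_const card_ord.
Qed.

Lemma q0 : q`_0 = 1.
Proof.
rewrite /q coef_sum big_ord_recl coefXn eqxx big1 ?addr0 // => i _.
by rewrite coefXn.
Qed.

Lemma dq1 : 2 * q^`().[1] = (d * D)%:R.
Proof.
rewrite /q linear_sum /= horner_sum.
rewrite (eq_bigr (fun i : 'I_D => (i : nat)%:R)); last first.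
  by move=> i _; rewrite derivXn hornerMn hornerXn expr1n.
rewrite -natr_sum -natrM sum_id2 mulnC //.
Qed.

Lemma p18E : p18 d a = a%:P * (D%:R%:P - 2%:P * q).
Proof.
rewrite /p18 /q -(big_mkord xpredT (fun i => 'X^i)) big_ltn // -mulr_sumr.
rewrite !polyC_natr natrB; last by lia.
rewrite -natr1; set T := (\sum_(_ <= _ < _) _); ring.
Qed.

Lemma two_neq0 : (2 : C) != 0.
Proof. by rewrite pnatr_eq0. Qed.
Lemma D_neq0 : (D%:R : C) != 0.
Proof. by rewrite pnatr_eq0. Qed.

Hypothesis a0 : a != 0.

Lemma size_p : size (p18 d a) = D.
Proof.
rewrite p18E size_Cmul // addrC size_polyDl size_polyN size_Cmul ?size_q //.
all: try exact: two_neq0.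
rewrite size_polyC D_neq0 /=; lia.
Qed.

Lemma p_neq0 : p18 d a != 0.
Proof. by rewrite -size_poly_eq0 size_p. Qed.

Lemma p1 : (p18 d a).[1] = - (a * D%:R).
Proof.
rewrite p18E !hornerE q1; ring.
Qed.

Lemma dp1 : (p18 d a)^`().[1] = - (a * (d * D)%:R).
Proof.
rewrite p18E !derivE !(hornerCM, hornerD, hornerN, hornerC) -dq1. ring.
Qed.


Lemma key m : let c := (a * D%:R) ^+ m.+1 in let e := (m.+1 %% D)%N in
  let sg := (-1 : C) ^+ m.+1 in
  2 * D%:R * colsum (p18 d a) m.+1 =
  c * (2 * D%:R * (e == 0%N)%:R + 2 * e%:R - 2 * D%:R * sg + (D%:R + 1) * (sg - 1)).
Proof.
move=> c e sg.
set p := p18 d a.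
set F := ('X * p) ^+ m.+1.
set M : {poly C} := ('X - 1) * ('X^D - 1).
have X1 : ('X - 1 : {poly C}) = 'X - 1%:P by rewrite polyC1.
have M0 : M != 0.
  by rewrite mulf_neq0 // -size_poly_eq0 ?X1 ?size_XsubC ?size_Xn_sub_1.
have sM : size M = D.+2.
  rewrite size_mul ?X1 ?size_XsubC ?size_Xn_sub_1 //; last by rewrite -size_poly_eq0 size_Xn_sub_1.
  by rewrite -size_poly_eq0 size_XsubC.
have sXp : size ('X * p) = D.+1 by rewrite mulrC size_mulX ?p_neq0 // size_p.
have sF : (size F <= D * m + D + 1)%N.
  have := size_exp ('X * p) m.+1; rewrite -/F sXp /= mulnS => h.
  by move: h; move: (D * m)%N (size F) => y s h; lia.
set A := F %/ M; set Rm := F %% M.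
have hFA : F = A * M + Rm := divp_eq F M.
have sA : (size A <= m * D)%N.
  by rewrite size_divp // sM /= mulnC; move: sF; move: (D * m)%N (size F) => y s h; lia.
have sR : (size Rm <= D.+1)%N by have := ltn_modp F M; rewrite M0 sM.
have colE : colsum p m.+1 = m%:R * Rm.[1] + Rm`_0.
  rewrite /colsum size_p /= coef_div_W // -/F.
  rewrite -(@WR _ _ _ (ltn0Sn d) m Rm sR (erefl _)).
  rewrite {1}hFA; change (W (m * D) D (A * M + Rm) = W (m * D) D Rm).
  by rewrite WD mulrC /M (@WMA _ _ _ (ltn0Sn d) A sA) add0r.
have M1 : M.[1] = 0 by rewrite /M !hornerE expr1n subrr mul0r.
have dM1 : M^`().[1] = 0.
  by rewrite /M !derivE !hornerE expr1n !subrr mul0r add0r.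
have qM : q %| M by rewrite /M Xsub1q; apply/dvdp_mull/dvdp_mulIr.
clearbody M.
have p1' : p.[1] = - (a * D%:R) := p1.
have dp1' : p^`().[1] = - (a * (d * D)%:R) := dp1.
have pE : p = a%:P * (D%:R%:P - 2%:P * q) := p18E.
clearbody p.
have R1 : Rm.[1] = F.[1].
  by rewrite [in RHS]hFA hornerD hornerM M1 mulr0 add0r.
have dR1 : Rm^`().[1] = F^`().[1].
  by rewrite [in RHS]hFA derivD derivM !hornerD !hornerM M1 dM1 !mulr0 !add0r.
have F1 : F.[1] = sg * c.
  by rewrite /F horner_exp hornerM hornerX p1' mul1r /sg /c exprNn.
have dF1 : F^`().[1] = (m.+1)%:R * D%:R * (sg * c).
  rewrite /F deriv_exp derivM derivX hornerMn hornerM horner_exp mul1r hornerD !hornerM hornerX p1' dp1' mul1r /=.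
  rewrite /sg /c -exprNn exprS -mulr_natr natrM -natr1. rewrite mul1r; set z := (- _) ^+ m; ring.
have qdiv : q %| Rm - c%:P * 'X^e.
  have hR : Rm = F - A * M by rewrite hFA addrAC subrr add0r.
  rewrite hR.
  have -> : F - A * M - c%:P * 'X^e =
      (F - ((a * D%:R)%:P * 'X) ^+ m.+1) + c%:P * ('X^(m.+1) - 'X^e) - A * M.
    rewrite exprMn -rmorphXn /= -/c.
    set u := 'X^(m.+1); set v := 'X^e; ring.
  apply: dvdp_sub; [apply: dvdp_add|exact: dvdp_mull].
    rewrite /F subrXX; apply: dvdp_mulr.
    have -> : 'X * p - (a * D%:R)%:P * 'X = q * (- (2 * a)%:P * 'X).
      by rewrite pE !rmorphM /=; ring.
    exact: dvdp_mulIl.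
  apply: dvdp_mull.
  rewrite {1}(divn_eq m.+1 D) -/e exprD mulnC exprM -{2}(mul1r 'X^e) -mulrBl.
  apply: dvdp_mulr; rewrite subrX1 Xsub1q; apply: dvdp_mulr; exact: dvdp_mulIr.
set L := (Rm - c%:P * 'X^e) %/ q.
have hL : L * q = Rm - c%:P * 'X^e := divpK qdiv.
have sL : (size L <= 2)%N.
  rewrite size_divp ?q_neq0 // size_q /=.
  have h1 : (size (Rm - c%:P * 'X^e)%R <= D.+1)%N.
    apply: leq_trans (size_polyD _ _) _; rewrite size_polyN geq_max sR /=.
    rewrite mul_polyC (leq_trans (size_scale_leq _ _)) // size_polyXn.
    by apply: leq_trans (ltn_pmod _ _) _.
  by move: h1; move: (size (Rm - c%:P * 'X^e)%R) => z h1; lia.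
have LE : L = (L`_0)%:P + (L`_1)%:P * 'X.
  apply/polyP => i; rewrite coefD coefC coefCM coefX.
  case: i => [|[|i]] /=; rewrite ?mulr0 ?mulr1 ?addr0 ?add0r //.
  by rewrite nth_default //; apply: leq_trans sL _.
have hRm : Rm = c%:P * 'X^e + ((L`_0)%:P + (L`_1)%:P * 'X) * q.
  by rewrite -LE hL addrC subrK.
set L0 := L`_0; set L1 := L`_1.
set Q1 := q^`().[1].
have hQ : 2 * Q1 - (d * D)%:R = 0 by rewrite dq1 subrr.
have Rm1 : Rm.[1] = c + (L0 + L1) * D%:R.
  by rewrite hRm !hornerE q1 expr1n mulr1.
have dRm1 : Rm^`().[1] = c * e%:R + (L1 * D%:R + (L0 + L1) * Q1).
  rewrite hRm !derivE /= !(hornerD, hornerM, hornerC, hornerX, hornerCM, hornerMn, hornerXn, expr1n) q1 -/Q1 -/L0 -/L1.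
  ring.
have Rm0 : Rm`_0 = c * (e == 0%N)%:R + L0.
  by rewrite -horner_coef0 hRm !(hornerD, hornerM, hornerC, hornerX, hornerCM, hornerMn, hornerXn)   horner_coef0 q0 expr0n -/L0 -/L1 mulr0 addr0 mulr1.
have E1 : c + (L0 + L1) * D%:R - sg * c = 0 by rewrite -Rm1 R1 F1 subrr.
have E2 : c * e%:R + (L1 * D%:R + (L0 + L1) * Q1) - m.+1%:R * D%:R * (sg * c) = 0.
  by rewrite -dRm1 dR1 dF1 subrr.
have -> : colsum p m.+1 = m%:R * Rm.[1] + Rm`_0 := colE.
rewrite Rm0 R1 F1.
apply/eqP; rewrite -subr_eq0; apply/eqP.
transitivity ((D%:R + 1) * (c + (L0 + L1) * D%:R - sg * c)
   - 2 * (c * e%:R + (L1 * D%:R + (L0 + L1) * Q1) - m.+1%:R * D%:R * (sg * c))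
   + (L0 + L1) * (2 * Q1 - (d * D)%:R)).
  rewrite natrM -!natr1; ring.
by rewrite E1 E2 hQ !mulr0 subrr addr0.
Qed.
End Main.

Theorem proposition18 (C : numClosedFieldType) (d : nat) (a : C) (k : nat) :
  (2 <= d)%N ->
  (0 < k)%N ->
  ((d.+1)%:R * a) ^+ k = 1 ->
  (forall j : nat, (0 < j)%N -> (j < k)%N -> ((d.+1)%:R * a) ^+ j != 1) ->
  let N := if odd d then lcmn k d.+1 else lcmn k (2 * d.+1) in
  forall m : nat, (1 <= m)%N -> colsum (p18 d a) (m + N) = colsum (p18 d a) m.
Proof.
move=> d2 k0 hk _ N m m1.
have a0 : a != 0.
  apply/eqP => a0; move: hk; rewrite a0 mulr0 expr0n.
  by rewrite eqn0Ngt k0 /= => /eqP; rewrite eq_sym oner_eq0.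
have [kN [DN eN]] : [/\ (k %| N)%N, (d.+1 %| N)%N & ~~ odd N].
  rewrite /N; case: ifP => hd.
    split; [exact: dvdn_lcml | exact: dvdn_lcmr |].
    apply/negP => oN; have := dvdn_odd (dvdn_lcmr k d.+1) oN.
    by rewrite /= hd.
  split; first exact: dvdn_lcml.
    exact: dvdn_trans (dvdn_mull _ (dvdnn _)) (dvdn_lcmr _ _).
  apply/negP => oN; have := dvdn_odd (dvdn_trans (dvdn_mulr _ (dvdnn 2)) (dvdn_lcmr k (2 * d.+1))) oN.
  by [].
case: m m1 => // m _.
have two0 : (2 * (d.+1)%:R : C) != 0 by rewrite mulf_neq0 // pnatr_eq0.
apply: (mulfI two0).
rewrite addSn (@key C d a d2 a0) (@key C d a d2 a0).
have -> : (a * (d.+1)%:R) ^+ (m + N).+1 = (a * (d.+1)%:R) ^+ m.+1.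
  rewrite -addSn exprD -(divnK kN) mulnC exprM [a * _]mulrC hk expr1n mulr1 //.
have -> : ((m + N).+1 %% d.+1 = m.+1 %% d.+1)%N.
  by rewrite -addSn -(divnK DN) addnC modnMDl.
have -> : (-1 : C) ^+ (m + N).+1 = (-1) ^+ m.+1.
  by rewrite -addSn exprD -[(-1 : C) ^+ N]signr_odd (negbTE eN) expr0 mulr1.
by [].
Qed.
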